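(* Let $(S,\curlyvee)$ be a $\curlyvee$-algebra. A non-empty subset $I\subseteq S$ is a $\lesssim$-ideal if and only if it is a down-set under $\lesssim$ such that $i\curlyvee j\in I$ whenever $i,j\in I$.
   Context: A $\curlyvee$-algebra is an algebra $(S,\curlyvee)$ with one binary operation such that, defining $a\sqcup b=a\curlyvee(a\curlyvee b)$ and $a\lesssim b$ iff $b\sqcup a=b$: $\sqcup$ is associative, $a\sqcup a=a$ and $a\sqcup b=(a\sqcup b)\sqcup a$; $\curlyvee$ is commutative and idempotent; $(a\curlyvee b)\sqcup(a\sqcup b)=a\sqcup b$; $a\sqcup(b\curlyvee c)=(a\sqcup b)\curlyvee(a\sqcup c)$; and if $d\lesssim a,b,c,a\curlyvee b,b\curlyvee c$ then $d\lesssim a\curlyvee c$. A $\lesssim$-ideal of $S$ is a non-empty subset $I$ that is a down-set under $\lesssim$ and satisfies $i\sqcup j\in I$ for all $i,j\in I$. *)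

(* Defs.v *)
Section VeeAlg.
Context {S : Type} (vee : S -> S -> S).

Definition sqcup (a b : S) : S := vee a (vee a b).

Definition lesssim (a b : S) : Prop := sqcup b a = b.

Record is_vee_algebra : Prop := {
  sqcup_assoc : forall a b c, sqcup a (sqcup b c) = sqcup (sqcup a b) c;
  sqcup_idem : forall a, sqcup a a = a;
  sqcup_regular : forall a b, sqcup a b = sqcup (sqcup a b) a;
  vee_comm : forall a b, vee a b = vee b a;
  vee_idem : forall a, vee a a = a;
  vee_sqcup_absorb : forall a b, sqcup (vee a b) (sqcup a b) = sqcup a b;
  sqcup_distr_vee : forall a b c, sqcup a (vee b c) = vee (sqcup a b) (sqcup a c);
  lesssim_vee_cond : forall a b c d,
    lesssim d a -> lesssim d b -> lesssim d c ->
    lesssim d (vee a b) -> lesssim d (vee b c) -> lesssim d (vee a c)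
}.

Definition down_set (I : S -> Prop) : Prop :=
  forall x y, I y -> lesssim x y -> I x.

Definition lesssim_ideal (I : S -> Prop) : Prop :=
  (exists x, I x) /\ down_set I /\ (forall i j, I i -> I j -> I (sqcup i j)).

End VeeAlg.

(* Main.v *)
Require Import Defs.

Theorem proposition4p5 (S : Type) (vee : S -> S -> S)
  (HS : is_vee_algebra vee) (I : S -> Prop) (Hne : exists x, I x) :
  lesssim_ideal vee I <->
  (down_set vee I /\ (forall i j, I i -> I j -> I (vee i j))).
Proof.
  destruct HS as [Hass Hid Hreg Hcomm Hvid Habs Hdis Hcond].
  unfold lesssim_ideal. split.
  - intros [_ [Hd Hc]]. split; [exact Hd|].
    intros i j Hi Hj. apply (Hd _ (sqcup vee i j)); [apply Hc; assumption|].
    unfold lesssim. rewrite Hdis. rewrite <- Hreg.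
    rewrite <- Hass, Hid. apply Hvid.
  - intros [Hd Hc]. split; [exact Hne|]. split; [exact Hd|].
    intros i j Hi Hj. unfold sqcup. apply Hc; [|apply Hc]; assumption.
Qed.
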